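(* For any weight $\omega\in\mathbb{R}^J$ with $\mathscr{T}_\omega=\mathscr{T}_{\max}$, the leading term ideal of $I_\mathcal{A}$ with respect to $\omega$ equals the Stanley–Reisner ideal of $\Sigma$, i.e. the ideal of $\mathbb{C}[y_{i,j}:(i,j)\in J]$ generated by the monomials $\prod_{(i,j)\in\mathcal{P}}y_{i,j}$ for $\mathcal{P}$ a primitive collection of $\Sigma$.
   Context: $N\cong\mathbb{Z}^n$, $M$ dual. $X$ smooth projective toric with fan $\Sigma$ and nef-partition $\Sigma(1)=I_1\sqcup\cdots\sqcup I_r$ (each $E_i=\sum_{\rho\in I_i}D_\rho$ nef), $I_i=\{\rho_{i,1},\dots,\rho_{i,n_i}\}$, $J=\{(i,j):1\le i\le r,0\le j\le n_i\}$, $\nu_{i,j}=(\rho_{i,j},e_i)$ ($j\ge1$), $\nu_{i,0}=(0,e_i)$ in $N\times\mathbb{Z}^r$, $\mathcal{A}=\{\nu_{i,j}\}$, $L_{\mathrm{ext}}=\ker(\mathbb{Z}^J\to N\times\mathbb{Z}^r,\ e_{i,j}\mapsto\nu_{i,j})$. Toric ideal $I_\mathcal{A}=\langle y^{\ell^+}-y^{\ell^-}:\ell\in L_{\mathrm{ext}}\rangle$, $\ell=\ell^+-\ell^-$ with $\ell^\pm\ge0$ of disjoint support; $\omega\in\mathbb{R}^J$ defines leading terms by maximal weight $\sum\omega_{i,j}m_{i,j}$ of $y^m$. $\mathscr{T}_\omega$ is the regular subdivision of $\mathcal{A}$ induced by $\omega$ (projection of lower faces of $\mathrm{Cone}\{(\nu,\omega_\nu)\}$);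 $\mathscr{T}_{\max}$ is the triangulation with maximal simplices $\{\nu_{1,0},\dots,\nu_{r,0}\}\cup\{\nu_{i,j}:\rho_{i,j}\in\sigma(1)\}$, $\sigma$ maximal in $\Sigma$. A primitive collection is $\mathcal{P}\subset\Sigma(1)$ not spanning a cone of $\Sigma$ while every proper subset does. *)

(* Defs.v *)
From HB Require Import structures.
From mathcomp Require Import all_boot all_order all_algebra.
From mathcomp Require Import reals complex mpoly.
Set Implicit Arguments. Unset Strict Implicit. Unset Printing Implicit Defensive.
Import Order.TTheory GRing.Theory Num.Theory.
Local Open Scope ring_scope.

Section ToricSetup.

Variable R : realType.
Variable n : nat.
(* Sigma(1): a finite type of rays, with primitive generators v rho in N = Z^n *)
Variable Rays : finType.
Variable v : Rays -> 'rV[int]_n.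

Definition rcone (S : {set Rays}) (x : 'rV[R]_n) : Prop :=
  exists a : Rays -> R,
    [/\ (forall rho, 0 <= a rho),
        (forall rho, rho \notin S -> a rho = 0)
      & x = \sum_(rho : Rays) a rho *: map_mx (fun z : int => z%:~R) (v rho)].

(* a fan is encoded by the ray sets sigma(1) of its cones *)
Definition maximal_cone (Sigma : {set {set Rays}}) (sigma : {set Rays}) : Prop :=
  sigma \in Sigma /\ forall tau : {set Rays}, tau \in Sigma -> sigma \subset tau -> tau = sigma.

Definition dualpair (m u : 'rV[int]_n) : int := \sum_(k < n) m 0 k * u 0 k.

Definition smooth_complete_fan (Sigma : {set {set Rays}}) : Prop :=
  [/\ injective v /\ (forall rho, [set rho] \in Sigma),
      (forall sigma tau : {set Rays}, sigma \in Sigma -> tau \subset sigma -> tau \in Sigma),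
      (* smoothness: the generators of each cone are part of a Z-basis of N *)
      (forall sigma : {set Rays}, sigma \in Sigma ->
        exists M : 'M[int]_n, M \in unitmx /\
          forall rho, rho \in sigma -> exists k : 'I_n, row k M = v rho),
      (* fan condition: cones meet along common faces *)
      (forall sigma tau : {set Rays}, sigma \in Sigma -> tau \in Sigma ->
        forall x, (rcone sigma x /\ rcone tau x) <-> rcone (sigma :&: tau) x)
    &
      forall x : 'rV[R]_n, exists2 sigma : {set Rays}, sigma \in Sigma & rcone sigma x].

(* the T-divisor sum_rho a_rho D_rho is ample (strictly convex support function) *)
Definition ample_divisor (Sigma : {set {set Rays}}) (a : Rays -> int) : Prop :=
  forall sigma : {set Rays}, maximal_cone Sigma sigma ->
    exists m : 'rV[int]_n, forall rho,
      (rho \in sigma -> dualpair m (v rho) = - a rho) /\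
      (rho \notin sigma -> - a rho < dualpair m (v rho)).

(* the T-divisor sum_rho a_rho D_rho is nef (convex support function) *)
Definition nef_divisor (Sigma : {set {set Rays}}) (a : Rays -> int) : Prop :=
  forall sigma : {set Rays}, maximal_cone Sigma sigma ->
    exists m : 'rV[int]_n, forall rho,
      (rho \in sigma -> dualpair m (v rho) = - a rho) /\
      (rho \notin sigma -> - a rho <= dualpair m (v rho)).

Definition smooth_projective_fan (Sigma : {set {set Rays}}) : Prop :=
  smooth_complete_fan Sigma /\ exists a, ample_divisor Sigma a.

Variable r : nat.
(* part rho = i  iff  rho \in I_i *)
Variable part : Rays -> 'I_r.

Definition nef_partition (Sigma : {set {set Rays}}) : Prop :=
  forall i : 'I_r, nef_divisor Sigma (fun rho => ((part rho == i) : nat)%:Z).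

(* J = {(i,0)} u {(i,j) : j >= 1}, re-indexed as 'I_r + Sigma(1):
   inl i <-> (i,0),  inr rho_{i,j} <-> (i,j) *)
Definition Jidx : finType := ('I_r + Rays)%type.

(* coordinates of N x Z^r *)
Definition Coord : finType := ('I_n + 'I_r)%type.

Definition nu (j : Jidx) (c : Coord) : int :=
  match j, c with
  | inl i, inl _ => 0
  | inl i, inr i' => ((i == i') : nat)%:Z
  | inr rho, inl k => v rho 0 k
  | inr rho, inr i' => ((part rho == i') : nat)%:Z
  end.

Definition in_Lext (l : Jidx -> int) : Prop :=
  forall c : Coord, \sum_(j : Jidx) l j * nu j c = 0.

Definition C := R[i].
Definition JPoly := {mpoly C[#|Jidx|]}.

Definition yvar (j : Jidx) : JPoly := 'X_(enum_rank j).

Definition ymon (m : Jidx -> nat) : JPoly := \prod_(j : Jidx) yvar j ^+ m j.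

Definition pospart (z : int) : nat := `|Num.max z 0|%N.
Definition negpart (z : int) : nat := `|Num.max (- z) 0|%N.

Definition ideal_gen (S : JPoly -> Prop) (p : JPoly) : Prop :=
  exists s : seq (JPoly * JPoly),
    (forall x, x \in s -> S x.2) /\ p = \sum_(x <- s) x.1 * x.2.

Definition toric_gen (p : JPoly) : Prop :=
  exists l, in_Lext l /\ p = ymon (fun j => pospart (l j)) - ymon (fun j => negpart (l j)).

Definition toric_ideal : JPoly -> Prop := ideal_gen toric_gen.

Variable omega : Jidx -> R.

Definition mweight (m : 'X_{1..#|Jidx|}) : R :=
  \sum_(j : Jidx) omega j * (m (enum_rank j))%:R.

Definition init_form (p : JPoly) : JPoly :=
  \sum_(m <- msupp p | all (fun m' => mweight m' <= mweight m) (msupp p))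
     p@_m *: 'X_[m].

Definition lead_ideal : JPoly -> Prop :=
  ideal_gen (fun q => exists f, toric_ideal f /\ q = init_form f).

(* cells of the regular subdivision T_omega: label sets of the lower faces of
   Cone{(nu_j, omega_j)} *)
Definition regsub_cell (S : {set Jidx}) : Prop :=
  exists c : Coord -> R, forall j : Jidx,
    (\sum_(k : Coord) c k * (nu j k)%:~R <= omega j) /\
    (j \in S <-> \sum_(k : Coord) c k * (nu j k)%:~R = omega j).

Definition Tmax_cell (Sigma : {set {set Rays}}) (S : {set Jidx}) : Prop :=
  exists sigma : {set Rays}, maximal_cone Sigma sigma /\
    S \subset [set j : Jidx | match j with inl _ => true | inr rho => rho \in sigma end].

Definition primitive_collection (Sigma : {set {set Rays}}) (P : {set Rays}) : Prop :=
  P \notin Sigma /\ forall Q : {set Rays}, Q \proper P -> Q \in Sigma.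

Definition SR_gen (Sigma : {set {set Rays}}) (p : JPoly) : Prop :=
  exists P : {set Rays}, primitive_collection Sigma P /\ p = \prod_(rho in P) yvar (inr rho).

Definition SR_ideal (Sigma : {set {set Rays}}) : JPoly -> Prop :=
  ideal_gen (SR_gen Sigma).

End ToricSetup.

(* Main.v *)
Require Import Defs.
From HB Require Import structures.
From mathcomp Require Import all_boot all_order all_algebra.
From mathcomp Require Import reals complex mpoly zify.
Set Implicit Arguments. Unset Strict Implicit. Unset Printing Implicit Defensive.
Import Order.TTheory GRing.Theory Num.Theory.
Local Open Scope ring_scope.

Section IdealGen.
Variables (R : realType) (Rays : finType) (r : nat).
Local Notation P := (JPoly R Rays r).
Implicit Types (S : P -> Prop) (p q : P).

Lemma ig_gen S p : S p -> ideal_gen S p.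
Proof. by move=> Sp; exists [:: (1, p)]; split; [move=> x; rewrite inE => /eqP -> | rewrite big_seq1 mul1r]. Qed.

Lemma ig0 S : ideal_gen S 0.
Proof. by exists [::]; split=> //; rewrite big_nil. Qed.

Lemma igD S p q : ideal_gen S p -> ideal_gen S q -> ideal_gen S (p + q).
Proof.
move=> [s [Hs ->]] [t [Ht ->]]; exists (s ++ t); split; last by rewrite big_cat.
by move=> x; rewrite mem_cat => /orP [/Hs|/Ht].
Qed.

Lemma igM S p q : ideal_gen S p -> ideal_gen S (q * p).
Proof.
move=> [s [Hs ->]]; exists [seq (q * x.1, x.2) | x <- s]; split.
  by move=> x /mapP [y ys ->] /=; apply: Hs.
by rewrite big_map mulr_sumr; apply: eq_bigr => x _; rewrite mulrA.
Qed.



Lemma ig_sum S (T : eqType) (s : seq T) (F : T -> P) :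
  (forall x, x \in s -> ideal_gen S (F x)) -> ideal_gen S (\sum_(x <- s) F x).
Proof.
elim: s => [|a s IH] H; first by rewrite big_nil; apply: ig0.
rewrite big_cons; apply: igD; first by apply: H; rewrite inE eqxx.
by apply: IH => x xs; apply: H; rewrite inE xs orbT.
Qed.

Lemma ig_sub S1 S2 p : (forall q, S1 q -> ideal_gen S2 q) -> ideal_gen S1 p -> ideal_gen S2 p.
Proof.
move=> H [s [Hs ->]]; apply: ig_sum => x xs; apply: igM; exact: H (Hs _ xs).
Qed.
End IdealGen.
Section Mono.
Variables (R : realType) (Rays : finType) (r : nat).
Local Notation J := (Jidx Rays r).
Local Notation N := #|J|.
Local Notation P := (JPoly R Rays r).

Definition mk (f : J -> nat) : 'X_{1..N} := [multinom f (enum_val i) | i < N].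
Definition mJ (m : 'X_{1..N}) (j : J) : nat := m (enum_rank j).

Lemma mkE f j : mk f (enum_rank j) = f j.
Proof. by rewrite mnmE enum_rankK. Qed.

Lemma mkJ m : mk (mJ m) = m.
Proof. by apply/mnmP => i; rewrite mnmE /mJ enum_valK. Qed.

Lemma mJk f : mJ (mk f) =1 f.
Proof. by move=> j; rewrite /mJ mkE. Qed.

Lemma mJ_inj : injective mJ.
Proof. by move=> m1 m2 e; rewrite -(mkJ m1) -(mkJ m2) e. Qed.

Lemma prodJ (G : 'I_N -> P) : \prod_(i < N) G i = \prod_(j : J) G (enum_rank j).
Proof.
rewrite (reindex (@enum_rank J)) //; exists enum_val => x _; [exact: enum_rankK | exact: enum_valK].
Qed.

Lemma ymonE f : ymon R f = 'X_[mk f] :> P.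
Proof.
rewrite mpolyXE_id prodJ /ymon; apply: eq_bigr => j _; by rewrite mkE.
Qed.

Lemma mkD f g : mk (fun j => f j + g j)%N = (mk f + mk g)%MM.
Proof. by apply/mnmP => i; rewrite mnmDE !mnmE. Qed.

End Mono.
Section Lfun.
Variables (K : comRingType) (N : nat).
Local Notation P := {mpoly K[N]}.
Implicit Types (p q : P) (Q : pred 'X_{1..N}).

Definition Lsum Q p := \sum_(m <- msupp p | Q m) p@_m.

Lemma Lsum_ext Q p s : uniq s -> {subset msupp p <= s} ->
  Lsum Q p = \sum_(m <- s | Q m) p@_m.
Proof.
move=> us sub; rewrite (bigID (fun m => m \in msupp p)) /=.
rewrite [X in _ = _ + X]big1 ?addr0; last first.
  by move=> m /andP [_ /memN_msupp_eq0].
rewrite (eq_bigl (fun m => (m \in msupp p) && Q m)); last by move=> m; rewrite andbC.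
rewrite -big_filter_cond /Lsum; apply: perm_big.
apply: uniq_perm; [exact: msupp_uniq | exact: filter_uniq |].
by move=> m; rewrite mem_filter; case: (boolP (m \in msupp p)) => // /sub ->.
Qed.

Lemma Lsum_lin Q a p q : Lsum Q (a *: p + q) = a * Lsum Q p + Lsum Q q.
Proof.
set s := undup (msupp p ++ msupp q ++ msupp (a *: p + q)).
have us : uniq s by exact: undup_uniq.
rewrite (@Lsum_ext _ _ s) // ?(@Lsum_ext _ p s) // ?(@Lsum_ext _ q s) //;
  try by move=> m mm; rewrite mem_undup !mem_cat mm ?orbT.
rewrite mulr_sumr -big_split /=; apply: eq_bigr => m _.
by rewrite mcoeffD mcoeffZ.
Qed.

Lemma Lsum0 Q : Lsum Q 0 = 0.
Proof. by rewrite /Lsum msupp0 big_nil. Qed.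

Lemma LsumD Q p q : Lsum Q (p + q) = Lsum Q p + Lsum Q q.
Proof. by rewrite -[p]scale1r Lsum_lin scale1r mul1r. Qed.

Lemma LsumZ Q a p : Lsum Q (a *: p) = a * Lsum Q p.
Proof. by rewrite -[a *: p]addr0 Lsum_lin Lsum0 addr0. Qed.

Lemma LsumN Q p : Lsum Q (- p) = - Lsum Q p.
Proof. by rewrite -scaleN1r LsumZ mulN1r. Qed.

Lemma Lsum_sum Q (T : Type) (s : seq T) (F : T -> P) :
  Lsum Q (\sum_(x <- s) F x) = \sum_(x <- s) Lsum Q (F x).
Proof.
elim: s => [|x s IH]; first by rewrite !big_nil Lsum0.
by rewrite !big_cons LsumD IH.
Qed.

Lemma LsumX Q m : Lsum Q ('X_[m] : P) = (Q m)%:R.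
Proof.
rewrite (@Lsum_ext _ _ [:: m]) // ?msuppX // big_mkcond big_seq1 mcoeffX eqxx.
by case: (Q m).
Qed.

Lemma Lsum_mulX Q p a b : (forall m, Q (m + a)%MM = Q (m + b)%MM) ->
  Lsum Q (p * ('X_[a] - 'X_[b])) = 0.
Proof.
move=> HQ; rewrite {1}(mpolyE p) mulr_suml Lsum_sum big1 // => m _.
rewrite -scalerAl mulrBr -!mpolyXD LsumZ -[X in _ - X]scale1r -scaleNr.
by rewrite addrC Lsum_lin !LsumX HQ mulN1r addNr mulr0.
Qed.
End Lfun.

Lemma posneg (z : int) : (pospart z)%:Z - (negpart z)%:Z = z.
Proof. rewrite /pospart /negpart. lia. Qed.
Lemma posneg_min (a b : nat) : (pospart (a%:Z - b%:Z) + minn a b = a)%N /\ (negpart (a%:Z - b%:Z) + minn a b = b)%N.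
Proof. rewrite /pospart /negpart. lia. Qed.

Section Toric.
Variables (R : realType) (n : nat) (Rays : finType) (v : Rays -> 'rV[int]_n)
  (r : nat) (part : Rays -> 'I_r).
Local Notation J := (Jidx Rays r).
Local Notation N := #|J|.
Local Notation P := (JPoly R Rays r).

Definition degA (f : J -> nat) (c : Coord n r) : int := \sum_(j : J) (f j)%:Z * nu v part j c.

Definition Qd (d : Coord n r -> int) : pred 'X_{1..N} :=
  fun m => [forall c, degA (mJ m) c == d c].

Lemma degA_mD (m1 m2 : 'X_{1..N}) c :
  degA (mJ (m1 + m2)%MM) c = degA (mJ m1) c + degA (mJ m2) c.
Proof.
rewrite /degA -big_split /=; apply: eq_bigr => j _.
by rewrite /mJ mnmDE PoszD mulrDl.
Qed.

Lemma toric_Lsum d (p : P) : toric_ideal v part p -> Lsum (Qd d) p = 0.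
Proof.
move=> [s [Hs ->]]; rewrite Lsum_sum big1_seq // => x xs.
have [l [Hl ->]] := Hs x xs; rewrite !ymonE; apply: Lsum_mulX => m.
rewrite /Qd; apply: eq_forallb => c; rewrite !degA_mD.
suff -> : degA (mJ (mk (fun j => pospart (l j)))) c = degA (mJ (mk (fun j => negpart (l j)))) c by [].
apply/eqP; rewrite -subr_eq0 /degA -sumrB.
apply/eqP; rewrite -[RHS](Hl c); apply: eq_bigr => j _.
by rewrite !mJk -mulrBl posneg.
Qed.

End Toric.

Lemma sum_seq_pick (K : nzRingType) (T : eqType) (s : seq T) (F : T -> K) k :
  uniq s -> \sum_(x <- s) F x * (x == k)%:R = if k \in s then F k else 0.
Proof.
elim: s => [|a s IH] /=; first by rewrite big_nil.
move=> /andP [an us]; rewrite big_cons IH // inE.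
case: (eqVneq a k) => [<-|ak] /=; first by rewrite (negbTE an) mulr1 addr0.
rewrite mulr0 add0r; case: ifP => // ks; by rewrite (negbTE ak).
Qed.

Section Init.
Variables (R : realType) (Rays : finType) (r : nat) (omega : Jidx Rays r -> R).
Local Notation J := (Jidx Rays r).
Local Notation N := #|J|.
Local Notation P := (JPoly R Rays r).

Definition wt (f : J -> nat) : R := \sum_(j : J) omega j * (f j)%:R.

Lemma mweightE m : Defs.mweight omega m = wt (mJ m).
Proof. by []. Qed.

Lemma init_coef (p : P) m : (init_form omega p)@_m =
  if (m \in msupp p) && all (fun m' => Defs.mweight omega m' <= Defs.mweight omega m) (msupp p)
  then p@_m else 0.
Proof.
rewrite /init_form raddf_sum /= big_mkcond /=.
rewrite (eq_bigr (fun m' => (if all (fun m'' => Defs.mweight omega m'' <= Defs.mweight omega m') (msupp p) then p@_m' else 0) * (m' == m)%:R)); last first.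
  by move=> m' _; case: ifP => _; rewrite ?mcoeffZ ?mcoeffX ?mcoeff0 ?mul0r.
rewrite sum_seq_pick ?msupp_uniq //.
by case: (m \in msupp p).
Qed.
End Init.

Lemma rowcolE (K : pzRingType) m p q (A : 'M[K]_(m, p)) (B : 'M[K]_(p, q)) i j :
  (row i A *m col j B) 0 0 = (A *m B) i j.
Proof. by rewrite !mxE; apply: eq_bigr => l _; rewrite !mxE. Qed.

Lemma dual_vec (n : nat) (Rays : finType) (v : Rays -> 'rV[int]_n)
  (sigma : {set Rays}) (M : 'M[int]_n) :
  injective v -> M \in unitmx ->
  (forall rho, rho \in sigma -> exists k, row k M = v rho) ->
  forall rho0, rho0 \in sigma -> exists y : 'cV[int]_n,
    forall rho, rho \in sigma -> (v rho *m y) 0 0 = (rho == rho0)%:R.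
Proof.
move=> vinj HM Hrows rho0 r0s; have [k0 Hk0] := Hrows _ r0s.
exists (col k0 (invmx M)) => rho rs; have [k Hk] := Hrows _ rs.
have val : forall k', (row k' M *m col k0 (invmx M)) 0 0 = (k' == k0)%:R.
  by move=> k'; rewrite rowcolE mulmxV // mxE.
case: (eqVneq rho rho0) => [->|ne].
  by rewrite -Hk0 val eqxx.
rewrite -Hk val; case: (eqVneq k k0) => // ekk.
by case/eqP: ne; apply: vinj; rewrite -Hk -Hk0 ekk.
Qed.

Lemma coef_extract (K : comNzRingType) (n : nat) (Rays : finType) (v : Rays -> 'rV[int]_n)
  (sigma : {set Rays}) (y : 'cV[int]_n) (a : Rays -> K) rho0 :
  rho0 \in sigma ->
  (forall rho, rho \in sigma -> (v rho *m y) 0 0 = (rho == rho0)%:R) ->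
  (forall rho, rho \notin sigma -> a rho = 0) ->
  ((\sum_rho a rho *: map_mx (fun z : int => z%:~R) (v rho)) *m map_mx (fun z : int => z%:~R) y) 0 0 = a rho0.
Proof.
move=> r0s Hy Ha; rewrite mulmx_suml summxE (bigD1 rho0) //= big1 ?addr0.
  by rewrite -scalemxAl mxE -map_mxM mxE Hy // eqxx mulr1.
move=> rho ne; rewrite -scalemxAl mxE -map_mxM mxE.
case: (boolP (rho \in sigma)) => rs; last by rewrite Ha ?mul0r.
by rewrite Hy // (negbTE ne) mulr0.
Qed.

Section Geo.
Variables (R : realType) (n : nat) (Rays : finType) (v : Rays -> 'rV[int]_n)
  (r : nat) (part : Rays -> 'I_r) (omega : Jidx Rays r -> R).
Local Notation J := (Jidx Rays r).
Local Notation N := #|J|.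
Local Notation P := (JPoly R Rays r).

Lemma sumJ (K : nmodType) (F : J -> K) :
  \sum_(j : J) F j = \sum_(i : 'I_r) F (inl i) + \sum_(rho : Rays) F (inr rho).
Proof. exact: (@big_sumType K 0 +%R 'I_r Rays xpredT F). Qed.

Definition cnu (c : Coord n r -> R) (j : J) : R := \sum_(k : Coord n r) c k * (nu v part j k)%:~R.

Lemma wt_split (c : Coord n r -> R) (f : J -> nat) :
  wt omega f = \sum_(j : J) (omega j - cnu c j) * (f j)%:R
             + \sum_(k : Coord n r) c k * (degA v part f k)%:~R.
Proof.
rewrite /wt /degA.
have -> : \sum_(k : Coord n r) c k * (\sum_(j : J) (f j)%:Z * nu v part j k)%:~R
        = \sum_(j : J) cnu c j * (f j)%:R.
  rewrite (eq_bigr (fun k => \sum_(j : J) c k * ((f j)%:R * (nu v part j k)%:~R))); last first.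
    by move=> k _; rewrite rmorph_sum mulr_sumr; apply: eq_bigr => j _; rewrite rmorphM.
  rewrite exchange_big /=; apply: eq_bigr => j _; rewrite /cnu mulr_suml.
  by apply: eq_bigr => k _; rewrite mulrA mulrAC.
by rewrite -big_split /=; apply: eq_bigr => j _; rewrite -mulrDl subrK.
Qed.


Definition Tset (sigma : {set Rays}) : {set J} :=
  [set j : J | match j with inl _ => true | inr rho => rho \in sigma end].

Lemma map_intr_id a b (A : 'M[int]_(a, b)) : map_mx (fun z : int => z%:~R) A = A.
Proof. by apply/matrixP => i j; rewrite mxE intz. Qed.

Lemma uniq_rep (c : Coord n r -> R) (S : {set J}) (sigma : {set Rays}) (M : 'M[int]_n)
  (f g : J -> nat) :
  (forall j, cnu c j <= omega j /\ (j \in S <-> cnu c j = omega j)) ->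
  S \subset Tset sigma ->
  injective v -> M \in unitmx ->
  (forall rho, rho \in sigma -> exists k, row k M = v rho) ->
  (forall j, (0 < g j)%N -> j \in S) ->
  (forall k, degA v part f k = degA v part g k) ->
  wt omega f <= wt omega g ->
  forall j, f j = g j.
Proof.
move=> Hc HST vinj HM Hrows Hg Hdeg Hwt.
have Sg : \sum_(j : J) (omega j - cnu c j) * (g j)%:R = 0.
  apply: big1 => j _; case: (posnP (g j)) => [->|gp]; first by rewrite mulr0.
  by have [_ [/(_ (Hg _ gp)) ->]] := Hc j; rewrite subrr mul0r.
have tge : forall j, 0 <= (omega j - cnu c j) * (f j)%:R.
  by move=> j; apply: mulr_ge0; [rewrite subr_ge0; case: (Hc j)|apply: ler0n].
have Sf : \sum_(j : J) (omega j - cnu c j) * (f j)%:R = 0.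
  apply/eqP; rewrite eq_le sumr_ge0 ?andbT; last by move=> j _; apply: tge.
  move: Hwt; rewrite (wt_split c f) (wt_split c g) Sg add0r.
  rewrite (eq_bigr (fun k => c k * (degA v part g k)%:~R)); last by move=> k _; rewrite Hdeg.
  by move=> H; rewrite -(lerD2r (\sum_k c k * (degA v part g k)%:~R)) add0r.
have Hf : forall j, (0 < f j)%N -> j \in S.
  move=> j fp; have /psumr_eq0P H := Sf; have := H (fun j _ => tge j) j isT.
  move/eqP; rewrite mulf_eq0 pnatr_eq0 eqn0Ngt fp orbF subr_eq0 => /eqP e.
  by case: (Hc j) => _ [_ ->].
pose l j := (f j)%:Z - (g j)%:Z.
have lS : forall j, l j != 0 -> j \in S.
  move=> j; rewrite /l subr_eq0; case: (posnP (f j)) => [f0|/Hf //].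
  by case: (posnP (g j)) => [g0|/Hg //]; rewrite f0 g0.
have lsig : forall rho, rho \notin sigma -> l (inr rho) = 0.
  move=> rho rs; apply/eqP; apply: contraNT rs => /lS /(subsetP HST).
  by rewrite inE.
have Hl : forall k, \sum_(j : J) l j * nu v part j k = 0.
  move=> k; transitivity (degA v part f k - degA v part g k); last by rewrite Hdeg subrr.
  rewrite /degA -sumrB.
  by apply: eq_bigr => j _; rewrite /l mulrBl.
have vec : \sum_(rho : Rays) l (inr rho) *: v rho = 0.
  apply/rowP => k; rewrite summxE mxE -[RHS](Hl (inl k)) sumJ.
  rewrite [X in _ = X + _]big1 ?add0r; last by move=> i _; rewrite /nu mulr0.
  by apply: eq_bigr => rho _; rewrite mxE.
have linr : forall rho, l (inr rho) = 0.
  move=> rho0; case: (boolP (rho0 \in sigma)) => r0s; last exact: lsig.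
  have [y Hy] := dual_vec vinj HM Hrows r0s.
  have := coef_extract r0s Hy lsig; rewrite map_intr_id.
  rewrite (eq_bigr (fun rho => l (inr rho) *: v rho)); last by move=> rho _; rewrite map_intr_id.
  by rewrite vec mul0mx mxE.
have linl : forall i, l (inl i) = 0.
  move=> i0; rewrite -[RHS](Hl (inr i0)) sumJ.
  rewrite [X in _ = _ + X]big1 ?addr0; last by move=> rho _; rewrite linr mul0r.
  rewrite (bigD1 i0) //= eqxx mulr1 big1 ?addr0 // => i ne.
  by rewrite (negbTE ne) mulr0.
move=> j; apply/eqP; rewrite -eqz_nat -subr_eq0.
by case: j => [i|rho]; rewrite -/(l _) ?linl ?linr.
Qed.


Lemma mJ_eq (m1 m2 : 'X_{1..N}) : (forall j, mJ m1 j = mJ m2 j) -> m1 = m2.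
Proof. by move=> H; rewrite -(mkJ m1) -(mkJ m2); apply/mnmP => i; rewrite !mnmE H. Qed.

Lemma max_ext (Sigma : {set {set Rays}}) sigma0 : sigma0 \in Sigma ->
  exists sigma, maximal_cone Sigma sigma /\ sigma0 \subset sigma.
Proof.
move=> s0S.
have H0 : (sigma0 \in Sigma) && (sigma0 \subset sigma0) by rewrite s0S subxx.
have [tau /andP [tS st] Hmax] := @arg_maxnP _ sigma0
   (fun tau => (tau \in Sigma) && (sigma0 \subset tau)) (fun tau => #|tau|) H0.
exists tau; split => //; split => // tau' t'S tt'.
have := Hmax tau'; rewrite t'S (subset_trans st tt') => /(_ isT) le.
by apply/esym/eqP; rewrite eqEcard tt' /=; exact: le.
Qed.

Lemma prim_in (Sigma : {set {set Rays}}) P0 : P0 \notin Sigma ->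
  exists P, primitive_collection Sigma P /\ P \subset P0.
Proof.
move=> P0S.
have H0 : (P0 \subset P0) && (P0 \notin Sigma) by rewrite subxx P0S.
have [P /andP [PP0 PS] Hmin] := @arg_minnP _ P0
   (fun P => (P \subset P0) && (P \notin Sigma)) (fun P => #|P|) H0.
exists P; split => //; split => // Q QP.
apply: contraT => QS; have := Hmin Q; rewrite (subset_trans (proper_sub QP) PP0) QS.
by move=> /(_ isT); rewrite leqNgt proper_card.
Qed.

Section Dir1.
Variables (Sigma : {set {set Rays}}).
Hypothesis HSF : smooth_complete_fan R v Sigma.
Hypothesis Hreg : forall S : {set J}, regsub_cell v part omega S <-> Tmax_cell Sigma S.

Lemma key1 (f : P) m : toric_ideal v part f -> m \in msupp (init_form omega f) ->
  exists Pc, primitive_collection Sigma Pc /\ forall rho, rho \in Pc -> (0 < mJ m (inr rho))%N.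
Proof.
case: HSF => [[vinj sing] clos smooth fanc compl] Hf.
rewrite mcoeff_msupp init_coef; case: ifP => [/andP [mf Hall] Hne|]; last by rewrite eqxx.
pose P0 := [set rho | (0 < mJ m (inr rho))%N].
case: (boolP (P0 \in Sigma)) => P0S; last first.
  have [Pc [HP sub]] := prim_in P0S; exists Pc; split => // rho /(subsetP sub).
  by rewrite inE.
exfalso.
have [sigma [[sS smax] P0s]] := max_ext P0S.
pose S := [set j : J | (0 < mJ m j)%N].
have TS : Tmax_cell Sigma S.
  exists sigma; split; first by split.
  apply/subsetP => j; rewrite !inE; case: j => // rho Hr.
  by apply: (subsetP P0s); rewrite inE.
have [c Hc] := (Hreg S).2 TS.
have [M [HM Hrows]] := smooth _ sS.
pose d := degA v part (mJ m).
have Qm : Qd v part d m by apply/forallP => k.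
have uq : forall m', m' \in msupp f -> Qd v part d m' -> m' = m.
  move=> m' m'f /forallP Qm'; apply: mJ_eq.
  apply: (@uniq_rep c S sigma M) => //.
  - apply/subsetP => j; rewrite !inE; case: j => // rho Hr.
    by apply: (subsetP P0s); rewrite inE.
  - by move=> j jp; rewrite inE.
  - by move=> k; apply/eqP; apply: Qm'.
  - exact: (allP Hall).
have L0 := toric_Lsum d Hf.
have : Lsum (Qd v part d) f = f@_m.
  rewrite /Lsum big_mkcond /=.
  rewrite (eq_big_seq (fun m' => f@_m' * (m' == m)%:R)); last first.
    move=> m' m'f; case: (boolP (Qd v part d m')) => Qm'.
      by rewrite (uq m' m'f Qm') eqxx mulr1.
    case: (eqVneq m' m) => [e|]; last by rewrite mulr0.
    by move: Qm'; rewrite e Qm.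
  by rewrite sum_seq_pick ?msupp_uniq // mf.
by rewrite L0 => e; move: Hne; rewrite -e eqxx.
Qed.

Lemma init_in_SR (f : P) : toric_ideal v part f -> SR_ideal Sigma (init_form omega f).
Proof.
move=> Hf; rewrite (mpolyE (init_form omega f)); apply: ig_sum => m Hm.
have [Pc [HP Hpos]] := key1 Hf Hm.
pose ind (j : J) : nat := match j with inl _ => 0%N | inr rho => (rho \in Pc) : nat end.
have le : (mk ind <= m)%MM.
  apply/mnm_lepP => i; rewrite mnmE; rewrite -{2}(enum_valK i).
  case: (enum_val i) => [//|rho] /=; case: (boolP (rho \in Pc)) => // rP.
  exact: Hpos.
have gen : \prod_(rho in Pc) yvar R (inr rho : J) = 'X_[mk ind].
  apply/esym; rewrite -ymonE /ymon (@big_sumType _ 1 *%R 'I_r Rays xpredT) /=.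
  rewrite big1 ?mul1r; last by move=> i _; rewrite /ind expr0.
  rewrite [RHS]big_mkcond /=; apply: eq_bigr => rho _.
  by rewrite /ind; case: (rho \in Pc); rewrite ?expr1 ?expr0.
have -> : (init_form omega f)@_m *: 'X_[m] = ((init_form omega f)@_m *: 'X_[m - mk ind]) * 'X_[mk ind].
  by rewrite -scalerAl -mpolyXD submK.
by apply: igM; apply: ig_gen; exists Pc; split.
Qed.

Lemma dir1 (p : P) : lead_ideal v part omega p -> SR_ideal Sigma p.
Proof.
apply: ig_sub => q [f [Hf ->]]; exact: init_in_SR.
Qed.
End Dir1.


Lemma PoszSum (T : Type) (s : seq T) (Pr : pred T) (F : T -> nat) :
  Posz (\sum_(i <- s | Pr i) F i)%N = \sum_(i <- s | Pr i) (F i)%:Z.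
Proof. by apply: (big_morph Posz PoszD). Qed.


Lemma init_binom (a b : 'X_{1..N}) : Defs.mweight omega b < Defs.mweight omega a ->
  init_form omega ('X_[a] - 'X_[b] : P) = 'X_[a].
Proof.
move=> lt; have ab : a != b by apply: contraTneq lt => ->; rewrite ltxx.
have ba : b != a by rewrite eq_sym.
have supp : forall k, k \in msupp ('X_[a] - 'X_[b] : P) -> k = a \/ k = b.
  move=> k; rewrite mcoeff_msupp mcoeffB !mcoeffX.
  case: (eqVneq a k) => [->|_]; first by left.
  by case: (eqVneq b k) => [->|_]; [right|rewrite subrr eqxx].
apply/mpolyP => k; rewrite init_coef mcoeffX.
case: (eqVneq a k) => [<-|ak].
  have ain : a \in msupp ('X_[a] - 'X_[b] : P).
    by rewrite mcoeff_msupp mcoeffB !mcoeffX eqxx (negbTE ba) subr0 oner_eq0.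
  rewrite ain /=; case: allP => [_|[]].
    by rewrite mcoeffB !mcoeffX eqxx (negbTE ba) subr0.
  by move=> m' /supp [->|->] //; apply: ltW.
case: ifP => // /andP [ks /allP Hall].
have ain : a \in msupp ('X_[a] - 'X_[b] : P).
  by rewrite mcoeff_msupp mcoeffB !mcoeffX eqxx (negbTE ba) subr0 oner_eq0.
have [e|e] := supp k ks; first by move: ak; rewrite e eqxx.
by have := Hall a ain; rewrite e leNgt lt.
Qed.

Definition indP (Pc : {set Rays}) (j : J) : nat :=
  match j with inl _ => 0%N | inr rho => (rho \in Pc) : nat end.

Lemma prod_ind (Pc : {set Rays}) : \prod_(rho in Pc) yvar R (inr rho : J) = 'X_[mk (indP Pc)].
Proof.
apply/esym; rewrite -ymonE /ymon (@big_sumType _ 1 *%R 'I_r Rays xpredT) /=.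
rewrite big1 ?mul1r; last by move=> i _; rewrite /indP expr0.
rewrite [RHS]big_mkcond /=; apply: eq_bigr => rho _.
by rewrite /indP; case: (rho \in Pc); rewrite ?expr1 ?expr0.
Qed.

Lemma wt_mk f : Defs.mweight omega (mk f) = wt omega f.
Proof. by rewrite mweightE /wt; apply: eq_bigr => j _; rewrite mJk. Qed.

Section Dir2.
Variables (Sigma : {set {set Rays}}).
Hypothesis HSF : smooth_complete_fan R v Sigma.
Hypothesis Hnef : nef_partition v part Sigma.
Hypothesis Hreg : forall S : {set J}, regsub_cell v part omega S <-> Tmax_cell Sigma S.

Lemma exists_w Pc : primitive_collection Sigma Pc -> exists sigma (b : Rays -> nat),
  [/\ maximal_cone Sigma sigma, (forall rho, rho \notin sigma -> b rho = 0%N),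
      (forall k, \sum_(rho in Pc) v rho 0 k = \sum_rho (b rho)%:Z * v rho 0 k)
    & (forall i, \sum_rho b rho * (part rho == i) <= \sum_rho (rho \in Pc) * (part rho == i))%N].
Proof.
case: HSF => [[vinj sing] clos smooth fanc compl] [PcS Pcmin].
pose x : 'rV[int]_n := \sum_(rho in Pc) v rho.
pose intr_mx := map_mx (fun z : int => (z%:~R : R)).
have [sigma0 s0S [a [a0 aout xE]]] := compl (intr_mx _ _ x).
have [sigma [[sS smax] s0s]] := max_ext s0S.
have aout' : forall rho, rho \notin sigma -> a rho = 0.
  move=> rho rs; apply: aout; apply: contra rs; exact: (subsetP s0s).
have [M [HM Hrows]] := smooth _ sS.
have aint : forall rho, exists z : int, a rho = z%:~R.
  move=> rho; case: (boolP (rho \in sigma)) => rs; last by exists 0; rewrite aout'.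
  have [y Hy] := dual_vec vinj HM Hrows rs.
  exists ((x *m y) 0 0); rewrite -(coef_extract rs Hy aout') -xE.
  by rewrite /intr_mx -map_mxM mxE.
pose b rho : nat := `|Num.floor (a rho)|%N.
have bE : forall rho, (b rho)%:R = a rho.
  move=> rho; have [z az] := aint rho.
  have z0 : 0 <= z by rewrite -(ler0z R) -az.
  by rewrite /b az intrKfloor -[X in _ = X%:~R](gez0_abs z0).
have bout : forall rho, rho \notin sigma -> b rho = 0%N.
  by move=> rho rs; apply/eqP; rewrite -(pnatr_eq0 R) bE aout'.
have xk : forall k, x 0 k = \sum_rho (b rho)%:Z * v rho 0 k.
  move=> k; apply: (@intr_inj R); have := congr1 (fun A : 'rV[R]_n => A 0 k) xE.
  rewrite /intr_mx mxE => ->; rewrite summxE rmorph_sum; apply: eq_bigr => rho _.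
  by rewrite !mxE -bE rmorphM.
exists sigma, b; split => //.
  by move=> k; rewrite -xk /x summxE.
move=> i; have [mm Hmm] := Hnef i (conj sS smax).
pose A rho : int := ((part rho == i) : nat)%:Z.
pose D := \sum_(k < n) mm 0 k * x 0 k.
have Da : - \sum_(rho in Pc) A rho <= D.
  rewrite /D (eq_bigr (fun k => \sum_(rho in Pc) mm 0 k * v rho 0 k)); last first.
    by move=> k _; rewrite /x summxE mulr_sumr.
  rewrite exchange_big /= -sumrN; apply: ler_sum => rho _.
  case: (boolP (rho \in sigma)) => rs.
    by have [/(_ rs) <- _] := Hmm rho.
  by have [_ /(_ rs)] := Hmm rho.
have Db : D = - \sum_rho (b rho)%:Z * A rho.
  rewrite /D (eq_bigr (fun k => \sum_rho (b rho)%:Z * (mm 0 k * v rho 0 k))); last first.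
    by move=> k _; rewrite xk mulr_sumr; apply: eq_bigr => rho _; rewrite mulrCA.
  rewrite exchange_big /= -sumrN; apply: eq_bigr => rho _.
  case: (boolP (rho \in sigma)) => rs; last by rewrite bout // mul0r oppr0 big1 // => k _; rewrite mul0r.
  have [/(_ rs) H _] := Hmm rho; rewrite /dualpair in H.
  by rewrite -mulr_sumr H mulrN.
move: Da; rewrite Db lerN2 => H.
rewrite -lez_nat !PoszSum.
apply: (@le_trans _ _ (\sum_rho (b rho)%:Z * A rho)).
  by apply: ler_sum => rho _; rewrite PoszM.
apply: le_trans H _.
rewrite big_mkcond /=; apply: ler_sum => rho _; rewrite PoszM.
by case: (rho \in Pc); rewrite ?mul1r ?mul0r.
Qed.


Lemma gen_lead (Pc : {set Rays}) : primitive_collection Sigma Pc ->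
  lead_ideal v part omega ('X_[mk (indP Pc)] : P).
Proof.
move=> HP; have [sigma [b [[sS smax] bout xk bnd]]] := exists_w HP.
case: HSF => [[vinj sing] clos smooth fanc compl].
pose s i := (\sum_rho b rho * (part rho == i))%N.
pose cnt i := (\sum_rho (rho \in Pc) * (part rho == i))%N.
pose w (j : J) : nat := match j with inl i => (cnt i - s i)%N | inr rho => b rho end.
pose u := indP Pc.
have Hdeg : forall k, degA v part u k = degA v part w k.
  case => [k|i]; rewrite /degA !sumJ.
    rewrite [X in X + _ = _]big1; last by move=> i _; rewrite /nu mulr0.
    rewrite [X in _ = X + _]big1; last by move=> i _; rewrite /nu mulr0.
    rewrite !add0r -xk [RHS]big_mkcond /=; apply: eq_bigr => rho _.
    by rewrite /u /indP /nu; case: (rho \in Pc); rewrite ?mul1r ?mul0r.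
  rewrite [X in X + _ = _]big1; last by move=> i' _; rewrite /u /indP mul0r.
  rewrite add0r [X in _ = X + _](bigD1 i) //= [X in _ = _ + X + _]big1 ?addr0; last first.
    by move=> i' ne; rewrite /nu (negbTE ne) mulr0.
  rewrite /nu eqxx mulr1.
  have -> : \sum_rho ((b rho)%:Z * ((part rho == i) : nat)%:Z) = (s i)%:Z.
    by rewrite /s PoszSum; apply: eq_bigr => rho _; rewrite PoszM.
  rewrite /w -PoszD subnK ?bnd // /cnt PoszSum.
  by apply: eq_bigr => rho _; rewrite PoszM.
have TS : Tmax_cell Sigma (Tset sigma) by exists sigma; split => //; split.
have [c Hc] := (Hreg (Tset sigma)).2 TS.
have [rho1 r1P r1s] : exists2 rho1, rho1 \in Pc & rho1 \notin sigma.
  case: HP => PcS _; apply/exists_inP; apply: contraNT PcS.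
  rewrite negb_exists_in => /forall_inP H; apply: (clos _ _ sS).
  by apply/subsetP => rho /H; rewrite negbK.
have ltw : wt omega w < wt omega u.
  rewrite (wt_split c w) (wt_split c u).
  rewrite [X in _ < _ + X](eq_bigr (fun k => c k * (degA v part w k)%:~R)); last by move=> k _; rewrite Hdeg.
  rewrite ltrD2r big1; last first.
    move=> j _; case: j => [i|rho].
      by have [_ [H _]] := Hc (inl i); rewrite /cnu H ?subrr ?mul0r // inE.
    case: (boolP (rho \in sigma)) => rs; last by rewrite /w bout // mulr0.
    by have [_ [H _]] := Hc (inr rho); rewrite /cnu H ?subrr ?mul0r // inE.
  rewrite (bigD1 (inr rho1)) //=; apply: ltr_pwDl.
    rewrite /u /indP r1P mulr1 subr_gt0 lt_def; have [le1 [_ H1]] := Hc (inr rho1).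
    rewrite le1 andbT; apply/eqP => e; move: (H1 (esym e)); rewrite inE.
    by move/negP: r1s.
  apply: sumr_ge0 => j _; apply: mulr_ge0; last by apply: ler0n.
  by rewrite subr_ge0; case: (Hc j).
pose l (j : J) : int := (u j)%:Z - (w j)%:Z.
have Hl : in_Lext v part l.
  move=> k; transitivity (degA v part u k - degA v part w k); last by rewrite Hdeg subrr.
  by rewrite /degA -sumrB; apply: eq_bigr => j _; rewrite /l mulrBl.
pose g (j : J) : nat := minn (u j) (w j).
have ftor : toric_ideal v part ('X_[mk u] - 'X_[mk w] : P).
  exists [:: ('X_[mk g], ymon R (fun j => pospart (l j)) - ymon R (fun j => negpart (l j)))].
  split.
    by move=> x; rewrite inE => /eqP -> /=; exists l.
  rewrite big_seq1 /= !ymonE mulrBr -!mpolyXD.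
  by congr (_ - _); congr 'X_[_]; apply/mnmP => i; rewrite mnmDE !mnmE /l addnC;
    have [H1 H2] := posneg_min (u (enum_val i)) (w (enum_val i)).
apply: ig_gen; exists ('X_[mk u] - 'X_[mk w]); split => //.
by rewrite init_binom // !wt_mk.
Qed.

Lemma dir2 (p : P) : SR_ideal Sigma p -> lead_ideal v part omega p.
Proof.
apply: ig_sub => q [Pc [HP ->]]; rewrite prod_ind; exact: gen_lead.
Qed.

End Dir2.

End Geo.

Local Close Scope ring_scope.

Theorem mainTheorem6
  (R : realType) (n : nat) (Rays : finType) (v : Rays -> 'rV[int]_n)
  (Sigma : {set {set Rays}}) (r : nat) (part : Rays -> 'I_r)
  (omega : Jidx Rays r -> R) :
  smooth_projective_fan R v Sigma ->
  nef_partition v part Sigma ->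
  (forall S : {set Jidx Rays r},
      regsub_cell v part omega S <-> Tmax_cell Sigma S) ->
  forall p : JPoly R Rays r,
    lead_ideal v part omega p <-> SR_ideal Sigma p.
Proof.
move=> [HSF _] Hnef Hreg p; split.
  exact: (dir1 HSF Hreg).
exact: (dir2 HSF Hnef Hreg).
Qed.
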